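(* Let $H$ be a complex Hilbert space, let $A$ be a closed symmetric operator in $H$ (its domain $D(A)$ need not be dense) which is invertible, i.e. injective, and let $z\in\mathbb{C}\setminus\mathbb{R}$ be fixed. Let $T$ be a non-expanding linear operator ($\|T\psi\|_H\le\|\psi\|_H$) with $D(T)\subseteq\mathcal{N}_z(A)$, $R(T)\subseteq\mathcal{N}_{\overline{z}}(A)$, which is $z$-admissible with respect to $A$. Let $B$ be the operator defined by $$D(B)=D(A)\dotplus (T-E_H)D(T),\qquad B(f+T\psi-\psi)=Af+zT\psi-\overline{z}\psi,\quad f\in D(A),\ \psi\in D(T).$$ Then the following two conditions are equivalent: (i) the operator $B$ is invertible (injective); (ii) the operator $\frac{z}{\overline{z}}T$ is $\frac{1}{z}$-admissible with respect to the operator $A^{-1}$.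
   Context: $E_H$ is the identity operator on $H$. For a closed symmetric operator $S$ in $H$ and $\lambda\in\mathbb{C}\setminus\mathbb{R}$, set $\mathcal{M}_\lambda(S)=(S-\lambda E_H)D(S)$ and $\mathcal{N}_\lambda(S)=H\ominus\mathcal{M}_\lambda(S)$ (the defect subspace). Note that $A^{-1}$ (with domain $R(A)$) is a closed symmetric operator and $\mathcal{N}_\lambda(A)=\mathcal{N}_{1/\lambda}(A^{-1})$, so $\frac{z}{\overline z}T$ acts from $\mathcal{N}_{1/z}(A^{-1})$ to $\mathcal{N}_{1/\overline{z}}(A^{-1})$. The forbidden operator $X_\lambda(S)$ is the (well-defined) operator with domain $D(X_\lambda(S))=P^H_{\mathcal{N}_\lambda(S)}\big(H\ominus\overline{D(S)}\big)$ given by $X_\lambda(S)P^H_{\mathcal{N}_\lambda(S)}g=P^H_{\mathcal{N}_{\overline{\lambda}}(S)}g$ for $g\in H\ominus\overline{D(S)}$, where $P^H_{M}$ denotes the orthogonal projection onto a subspace $M$. A linear operator $C$ with $D(C)\subseteq\mathcal{N}_\lambda(S)$, $R(C)\subseteq\mathcal{N}_{\overline\lambda}(S)$ is called $\lambda$-admissible with respect to $S$ if there is no nonzero $\psi\in D(C)\cap D(X_\lambda(S))$ with $C\psi=X_\lambda(S)\psi$ (equivalently, $C-X_\lambda(S)$ is injective). *)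

(* Defs.v *)
From mathcomp Require Import all_boot all_algebra.
From mathcomp Require Import complex.
From mathcomp Require Import reals.
Import GRing.Theory Num.Theory.
Set Implicit Arguments. Unset Strict Implicit. Unset Printing Implicit Defensive.
Local Open Scope ring_scope.
Local Open Scope complex_scope.

Section Hilbert.
Variable R : realType.
Variable V : lmodType R[i].
Variable inner : V -> V -> R[i].

Definition is_inner_product : Prop :=
  [/\ (forall (a : R[i]) (x y w : V), inner (a *: x + y) w = a * inner x w + inner y w),
      (forall x y : V, inner y x = (inner x y)^*),
      (forall x : V, 0 <= inner x x) &
      (forall x : V, inner x x = 0 -> x = 0)].

Definition hnorm (x : V) : R[i] := sqrtC (inner x x).

Definition converges (u : nat -> V) (l : V) : Prop :=
  forall e : R, 0 < e -> exists N : nat, forall n : nat, (N <= n)%N ->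
    hnorm (u n - l) < e%:C.

Definition cauchy (u : nat -> V) : Prop :=
  forall e : R, 0 < e -> exists N : nat, forall m n : nat, (N <= m)%N -> (N <= n)%N ->
    hnorm (u m - u n) < e%:C.

Definition is_hilbert : Prop :=
  is_inner_product /\ forall u : nat -> V, cauchy u -> exists l : V, converges u l.

Definition subspace (M : V -> Prop) : Prop :=
  M 0 /\ forall (a : R[i]) (x y : V), M x -> M y -> M (a *: x + y).

Definition orth (M : V -> Prop) : V -> Prop :=
  fun g => forall m, M m -> inner g m = 0.

Definition hclosure (M : V -> Prop) : V -> Prop :=
  fun x => forall e : R, 0 < e -> exists m, M m /\ hnorm (x - m) < e%:C.

(* m = P^H_M g : orthogonal projection of g onto the subspace M *)
Definition is_proj (M : V -> Prop) (g m : V) : Prop := M m /\ orth M (g - m).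

(* An operator in H is given by its graph S : V -> V -> Prop
   ((x, y) in the graph iff x \in D(S) and S x = y). *)
Definition linop (S : V -> V -> Prop) : Prop :=
  (forall x y1 y2, S x y1 -> S x y2 -> y1 = y2) /\
  S 0 0 /\
  (forall (a : R[i]) x1 y1 x2 y2, S x1 y1 -> S x2 y2 -> S (a *: x1 + x2) (a *: y1 + y2)).

Definition dom (S : V -> V -> Prop) : V -> Prop := fun x => exists y, S x y.
Definition ran (S : V -> V -> Prop) : V -> Prop := fun y => exists x, S x y.

Definition closed_op (S : V -> V -> Prop) : Prop :=
  forall (u v : nat -> V) (x y : V), (forall n, S (u n) (v n)) ->
    converges u x -> converges v y -> S x y.

Definition symmetric_op (S : V -> V -> Prop) : Prop :=
  forall x1 y1 x2 y2, S x1 y1 -> S x2 y2 -> inner y1 x2 = inner x1 y2.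

Definition closed_symmetric (S : V -> V -> Prop) : Prop :=
  [/\ linop S, closed_op S & symmetric_op S].

Definition injective_op (S : V -> V -> Prop) : Prop :=
  forall x1 x2 y, S x1 y -> S x2 y -> x1 = x2.

Definition inv_op (S : V -> V -> Prop) : V -> V -> Prop := fun y x => S x y.

Definition scale_op (c : R[i]) (S : V -> V -> Prop) : V -> V -> Prop :=
  fun x y => exists y', S x y' /\ y = c *: y'.

Definition Mdef (l : R[i]) (S : V -> V -> Prop) : V -> Prop :=
  fun w => exists x y, S x y /\ w = y - l *: x.
Definition Ndef (l : R[i]) (S : V -> V -> Prop) : V -> Prop := orth (Mdef l S).

(* graph of the forbidden operator X_lambda(S):
   X (P_{N_lambda} g) = P_{N_{conj lambda}} g for g in H (-) closure D(S) *)
Definition forbidden (l : R[i]) (S : V -> V -> Prop) : V -> V -> Prop :=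
  fun psi phi => exists g, orth (hclosure (dom S)) g /\
    is_proj (Ndef l S) g psi /\ is_proj (Ndef l^* S) g phi.

Definition admissible (l : R[i]) (S C : V -> V -> Prop) : Prop :=
  [/\ linop C,
      (forall x, dom C x -> Ndef l S x),
      (forall y, ran C y -> Ndef l^* S y) &
      ~ (exists psi phi, C psi phi /\ psi <> 0 /\ forbidden l S psi phi)].

Definition Bop (z : R[i]) (A T : V -> V -> Prop) : V -> V -> Prop :=
  fun x y => exists f Af psi Tpsi, A f Af /\ T psi Tpsi /\
    x = f + Tpsi - psi /\ y = Af + z *: Tpsi - z^* *: psi.

End Hilbert.

(* Main.v *)
Require Import Defs.
From mathcomp Require Import all_boot all_order all_algebra.
From mathcomp Require Import complex.
From mathcomp Require Import reals.
From mathcomp Require Import ring lra.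
Import Order.TTheory GRing.Theory Num.Theory.
Local Open Scope ring_scope.
Local Open Scope complex_scope.
Lemma sub4 (V : zmodType) (a b c d : V) : a - b - (c - d) = a - c - (b - d).
Proof. by rewrite !opprB !addrA addrAC (addrAC a) -!addrA (addrC d). Qed.
From mathcomp Require Import classical_sets boolp.
Section Basics.
Variable R : realType.
Variable V : lmodType R[i].
Variable ip : V -> V -> R[i].
Hypothesis Hip : is_inner_product ip.

Lemma ipDZl a x y w : ip (a *: x + y) w = a * ip x w + ip y w.
Proof. by case: Hip. Qed.
Lemma ipC x y : ip y x = conjc (ip x y).
Proof. by case: Hip. Qed.
Lemma ncj (x : R[i]) : Num.conj x = conjc x. Proof. by []. Qed.
Lemma cjD (a b : R[i]) : conjc (a + b) = conjc a + conjc b.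
Proof. by case: a; case: b => * /=; congr Complex; ring. Qed.
Lemma cjN (a : R[i]) : conjc (- a) = - conjc a.
Proof. by case: a => * /=; congr Complex; ring. Qed.
Lemma cjM (a b : R[i]) : conjc (a * b) = conjc a * conjc b.
Proof. by case: a; case: b => * /=; congr Complex; ring. Qed.
Lemma ip0l w : ip 0 w = 0.
Proof.
have := ipDZl 1 0 0 w; rewrite scale1r addr0 mul1r => h.
have : ip 0 w + ip 0 w - ip 0 w = ip 0 w - ip 0 w by rewrite -h.
by rewrite addrK subrr.
Qed.
Lemma ipDl x y w : ip (x + y) w = ip x w + ip y w.
Proof. by rewrite -[x]scale1r ipDZl mul1r scale1r. Qed.
Lemma ipZl a x w : ip (a *: x) w = a * ip x w.
Proof. by rewrite -[a *: x]addr0 ipDZl ip0l addr0. Qed.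
Lemma ipNl x w : ip (- x) w = - ip x w.
Proof. by rewrite -scaleN1r ipZl mulN1r. Qed.
Lemma ipBl x y w : ip (x - y) w = ip x w - ip y w.
Proof. by rewrite ipDl ipNl. Qed.
Lemma ip0r w : ip w 0 = 0.
Proof. by rewrite ipC ip0l conjc0. Qed.
Lemma ipDr x y w : ip w (x + y) = ip w x + ip w y.
Proof. by rewrite ipC ipDl cjD -!ipC. Qed.
Lemma ipZr a x w : ip w (a *: x) = conjc a * ip w x.
Proof. by rewrite ipC ipZl cjM -ipC. Qed.
Lemma ipNr x w : ip w (- x) = - ip w x.
Proof. by rewrite ipC ipNl cjN -ipC. Qed.
Lemma ipBr x y w : ip w (x - y) = ip w x - ip w y.
Proof. by rewrite ipDr ipNr. Qed.

Definition nn x := complex.Re (ip x x).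
Lemma ipxx x : ip x x = (nn x)%:C.
Proof.
case: Hip => _ _ H _; have := H x; rewrite /nn.
by case: (ip x x) => a b; rewrite lecE /= => /andP[/eqP -> _].
Qed.
Lemma nn_ge0 x : 0 <= nn x.
Proof. by case: Hip => _ _ H _; have := H x; rewrite ipxx ler0c. Qed.
Lemma nn_eq0 x : nn x = 0 -> x = 0.
Proof. by case: Hip => _ _ _ H; move=> h; apply: H; rewrite ipxx h. Qed.
Lemma ReD (a b : R[i]) : complex.Re (a + b) = complex.Re a + complex.Re b.
Proof. by case: a; case: b. Qed.
Lemma ReN (a : R[i]) : complex.Re (- a) = - complex.Re a.
Proof. by case: a. Qed.
Lemma ReB (a b : R[i]) : complex.Re (a - b) = complex.Re a - complex.Re b.
Proof. by rewrite ReD ReN. Qed.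
Lemma Recj (a : R[i]) : complex.Re (conjc a) = complex.Re a.
Proof. by case: a. Qed.
Lemma ReMC (a : R[i]) (r : R) : complex.Re (a * r%:C) = complex.Re a * r.
Proof. by case: a => * /=; ring. Qed.
Lemma ReCM (a : R[i]) (r : R) : complex.Re (r%:C * a) = r * complex.Re a.
Proof. by case: a => * /=; ring. Qed.
Lemma cjC (r : R) : conjc (r%:C) = r%:C.
Proof. by rewrite /= oppr0. Qed.

Definition re x y := complex.Re (ip x y).
Lemma reC x y : re y x = re x y.
Proof. by rewrite /re ipC Recj. Qed.
Lemma reDr x y w : re w (x + y) = re w x + re w y.
Proof. by rewrite /re ipDr ReD. Qed.
Lemma reDl x y w : re (x + y) w = re x w + re y w.
Proof. by rewrite /re ipDl ReD. Qed.
Lemma reNr x w : re w (- x) = - re w x.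
Proof. by rewrite /re ipNr ReN. Qed.
Lemma reNl x w : re (- x) w = - re x w.
Proof. by rewrite /re ipNl ReN. Qed.
Lemma reBr x y w : re w (x - y) = re w x - re w y.
Proof. by rewrite reDr reNr. Qed.
Lemma reBl x y w : re (x - y) w = re x w - re y w.
Proof. by rewrite reDl reNl. Qed.
Lemma reZr (r : R) x w : re w (r%:C *: x) = r * re w x.
Proof. by rewrite /re ipZr cjC ReCM. Qed.
Lemma reZl (r : R) x w : re (r%:C *: x) w = r * re x w.
Proof. by rewrite /re ipZl ReCM. Qed.
Lemma rexx x : re x x = nn x.
Proof. by []. Qed.

Lemma nnE x : nn x = re x x. Proof. by []. Qed.
Lemma nnD x y : nn (x + y) = nn x + nn y + 2 * re x y.
Proof. rewrite !nnE reDl !reDr (reC x y); ring. Qed.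
Lemma nnB x y : nn (x - y) = nn x + nn y - 2 * re x y.
Proof. rewrite !nnE reDl !reDr !reNr !reNl opprK (reC x y); ring. Qed.
Lemma nnN x : nn (- x) = nn x.
Proof. by rewrite !nnE reNl reNr opprK. Qed.
Lemma nnZr (r : R) x : nn (r%:C *: x) = r ^+ 2 * nn x.
Proof. rewrite !nnE reZl reZr; ring. Qed.
Lemma nnZ (c : R[i]) x : nn (c *: x) = complex.Re (c * conjc c) * nn x.
Proof. by rewrite /nn ipZl ipZr mulrA ipxx ReMC. Qed.
Lemma nn0 : nn 0 = 0.
Proof. by rewrite /nn ip0l. Qed.

Lemma CS x y : re x y ^+ 2 <= nn x * nn y.
Proof.
have [y0|ny] := eqVneq (nn y) 0.
  by have e := nn_eq0 _ y0; rewrite y0 e /re ip0r mulr0 expr0n.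
have ny0 : 0 < nn y by rewrite lt_def ny nn_ge0.
have := nn_ge0 (x - (re x y / nn y)%:C *: y).
rewrite nnB nnZr reZr => h.
have h2 : 0 <= nn y * (nn x + (re x y / nn y) ^+ 2 * nn y - 2 * (re x y / nn y * re x y)).
  by rewrite mulr_ge0 // nn_ge0.
have h3 : nn y * (nn x + (re x y / nn y) ^+ 2 * nn y - 2 * (re x y / nn y * re x y))
   = nn x * nn y - re x y ^+ 2.
  by field.
by rewrite h3 subr_ge0 in h2.
Qed.
Lemma hnorm_lt x e : 0 < e -> (hnorm ip x < e%:C) = (nn x < e ^+ 2).
Proof.
move=> e0; rewrite /hnorm ipxx.
have -> : e%:C = sqrtC ((e ^+ 2)%:C) by rewrite rmorphXn sqrCK // ler0c ltW.
rewrite ltr_sqrtC ?ltcR // qualifE /= ?ler0c ?nn_ge0 ?sqr_ge0 //.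
Qed.

Lemma le0_small (a b : R) : 0 <= b -> (forall e, 0 < e -> a <= b * e ^+ 2) -> a <= 0.
Proof.
move=> b0 H; rewrite leNgt; apply/negP => a0.
have d0 : 0 < a + b + 1 by lra.
have e0 : 0 < a / (a + b + 1) by rewrite divr_gt0.
have := H _ e0.
have e1 : a / (a + b + 1) <= 1 by rewrite ler_pdivrMr // mul1r; lra.
have h1 : b * (a / (a + b + 1)) ^+ 2 <= b * (a / (a + b + 1)).
  rewrite ler_wpM2l // expr2 ler_piMr // ltW //.
have h2 : b * (a / (a + b + 1)) < a.
  rewrite mulrA ltr_pdivrMr //; nra.
lra.
Qed.

Lemma sqr_le0 (a : R) : a ^+ 2 <= 0 -> a = 0.
Proof. by move=> h; apply/eqP; rewrite -sqrf_eq0 eq_le h sqr_ge0. Qed.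

Lemma ip_eq0 (c : R[i]) : complex.Re c = 0 -> complex.Re ('i * c) = 0 -> c = 0.
Proof. by case: c => a b /= -> h; congr Complex; lra. Qed.

Lemma orth_closure (D : V -> Prop) g :
  (forall m, D m -> ip g m = 0) -> forall x, hclosure ip D x -> ip g x = 0.
Proof.
move=> Hg x Hx.
have reL : forall g', (forall m, D m -> ip g' m = 0) -> re g' x = 0.
  move=> g' Hg'; apply: sqr_le0; apply: (@le0_small _ (nn g')); first exact: nn_ge0.
  move=> e e0; case: (Hx e e0) => m [Dm hm]; rewrite hnorm_lt // in hm.
  have -> : re g' x = re g' (x - m) by rewrite reBr /re (Hg' m Dm) /= subr0.
  apply: le_trans (CS _ _) _; rewrite ler_wpM2l ?nn_ge0 // ltW //.
apply: ip_eq0; first exact: reL.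
have := reL ('i *: g); rewrite /re ipZl; apply=> m Dm; by rewrite ipZl Hg // mulr0.
Qed.
Lemma real_conj (c : R[i]) : conjc c = c -> c = (complex.Re c)%:C.
Proof. by case: c => a b /= [h]; congr Complex; lra. Qed.

Lemma para2 w x y : nn (x - y) =
  2 * nn (w - x) + 2 * nn (w - y) - 4 * nn (w - (2^-1)%:C *: (x + y)).
Proof.
rewrite !nnB nnZr !reZr !reDr nnD (reC x w) (reC y w); by field.
Qed.

Lemma archi (e : R) : 0 < e -> exists N : nat, forall n, (N <= n)%N -> n.+1%:R^-1 < e.
Proof.
move=> e0; exists (Num.trunc e^-1) => n hn.
rewrite invf_plt ?posrE ?ltr0Sn //.
apply: lt_le_trans (truncnS_gt _) _; rewrite ler_nat ltnS //.
Qed.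

Lemma sqrt_sqr_ge0 (a : R) : 0 <= a -> Num.sqrt (a ^+ 2) = a.
Proof. by move=> a0; rewrite sqrtr_sqr ger0_norm. Qed.

Lemma sqrtD_le (x y : R) : 0 <= x -> 0 <= y ->
  Num.sqrt (x + y) <= Num.sqrt x + Num.sqrt y.
Proof.
move=> x0 y0.
have s0 : 0 <= Num.sqrt x + Num.sqrt y by rewrite addr_ge0 ?sqrtr_ge0.
rewrite -(sqrt_sqr_ge0 _ s0) ler_sqrt ?sqr_ge0 //.
rewrite sqrrD !sqr_sqrtr //.
have : 0 <= Num.sqrt x * Num.sqrt y by rewrite mulr_ge0 ?sqrtr_ge0.
lra.
Qed.

Lemma re_le a b : re a b <= Num.sqrt (nn a) * Num.sqrt (nn b).
Proof.
apply: le_trans (ler_norm _) _.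
rewrite -sqrtr_sqr -sqrtrM ?nn_ge0 // ler_sqrt ?mulr_ge0 ?nn_ge0 //; exact: CS.
Qed.

Lemma tri a b : Num.sqrt (nn (a + b)) <= Num.sqrt (nn a) + Num.sqrt (nn b).
Proof.
have s0 : 0 <= Num.sqrt (nn a) + Num.sqrt (nn b) by rewrite addr_ge0 ?sqrtr_ge0.
rewrite -(sqrt_sqr_ge0 _ s0) ler_sqrt ?sqr_ge0 //.
rewrite sqrrD !sqr_sqrtr ?nn_ge0 // nnD.
have := re_le a b; lra.
Qed.

Lemma conv_ext (a b : nat -> V) l : (forall n, a n = b n) ->
  converges ip a l -> converges ip b l.
Proof. by move=> h ca e e0; have [N HN] := ca e e0; exists N => n hn; rewrite -h; apply: HN. Qed.

Lemma nnD_le x y : nn (x + y) <= 2 * nn x + 2 * nn y.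
Proof. have := nn_ge0 (x - y); rewrite nnB nnD; lra. Qed.
Lemma KcE (c : R[i]) : complex.Re (c * conjc c) = complex.Re c ^+ 2 + complex.Im c ^+ 2.
Proof. by case: c => a b /=; ring. Qed.
Lemma Kc_ge0 (c : R[i]) : 0 <= complex.Re (c * conjc c).
Proof. by rewrite KcE addr_ge0 ?sqr_ge0. Qed.

Lemma conv_lin (c : R[i]) x y l l' : converges ip x l -> converges ip y l' ->
  converges ip (fun n => c *: x n + y n) (c *: l + l').
Proof.
move=> cx cy e e0.
set K := complex.Re (c * conjc c).
have K0 : 0 <= K by exact: Kc_ge0.
have e1p : 0 < e / (2 * (K + 1)) by rewrite divr_gt0 // mulr_gt0 //; lra.
have e2p : 0 < e / 2 by rewrite divr_gt0.
have [N1 H1] := cx _ e1p; have [N2 H2] := cy _ e2p.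
exists (maxn N1 N2) => n hn.
have h1 := H1 n (leq_trans (leq_maxl _ _) hn).
have h2 := H2 n (leq_trans (leq_maxr _ _) hn).
rewrite hnorm_lt // in h1; rewrite hnorm_lt // in h2; rewrite hnorm_lt //.
have -> : c *: x n + y n - (c *: l + l') = c *: (x n - l) + (y n - l').
  by rewrite scalerBr opprD addrACA.
apply: le_lt_trans (nnD_le _ _) _; rewrite nnZ -/K.
set t := e / (2 * (K + 1)) in h1 e1p.
have te : e = t * (2 * (K + 1)) by rewrite /t mulfVK // mulf_neq0 //; lra.
have hx := nn_ge0 (x n - l).
have h3 : K * nn (x n - l) <= K * t ^+ 2 by rewrite ler_wpM2l // ltW.
rewrite te in h2 *.
have h4 : K * t ^+ 2 < t ^+ 2 * (K + 1) ^+ 2.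
  have : 0 < t ^+ 2 by rewrite exprn_gt0.
  nra.
have h5 : (t * (2 * (K + 1)) / 2) = t * (K + 1) by field.
rewrite h5 in h2.
nra.
Qed.
Section Proj.
Variable S : V -> V -> Prop.
Variable mu : R[i].
Hypothesis HS : closed_symmetric ip S.
Hypothesis Hmu : conjc mu != mu.

Lemma S_lin a {x1 y1 x2 y2} : S x1 y1 -> S x2 y2 -> S (a *: x1 + x2) (a *: y1 + y2).
Proof. by case: HS => [[_ [_ H]] _ _] h1 h2; exact: (H a _ _ _ _ h1 h2). Qed.
Lemma S00 : S 0 0.
Proof. by case: HS => [[_ [H _]] _ _]. Qed.
Lemma S_fun {x y1 y2} : S x y1 -> S x y2 -> y1 = y2.
Proof. by case: HS => [[H [_ _]] _ _] h1 h2; exact: (H _ _ _ h1 h2). Qed.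
Lemma S_sym {x1 y1 x2 y2} : S x1 y1 -> S x2 y2 -> ip y1 x2 = ip x1 y2.
Proof. by case: HS => [_ _ H] h1 h2; exact: (H _ _ _ _ h1 h2). Qed.
Lemma S_sub {x1 y1 x2 y2} : S x1 y1 -> S x2 y2 -> S (x1 - x2) (y1 - y2).
Proof.
move=> h1 h2; have := S_lin (-1) h2 h1.
by rewrite !scaleN1r (addrC (- x2)) (addrC (- y2)).
Qed.
Lemma S_scale a {x y} : S x y -> S (a *: x) (a *: y).
Proof. by move=> h; have := S_lin a h S00; rewrite !addr0. Qed.

Local Notation M := (Mdef mu S).

Lemma M_lin a {m1 m2} : M m1 -> M m2 -> M (a *: m1 + m2).
Proof.
move=> [x1 [y1 [h1 ->]]] [x2 [y2 [h2 ->]]].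
exists (a *: x1 + x2), (a *: y1 + y2); split; first exact: S_lin.
rewrite scalerBr !scalerDr !scalerA (mulrC mu a) opprD.
by rewrite addrACA.
Qed.
Lemma M0 : M 0.
Proof. by exists 0, 0; split; [exact: S00 | rewrite scaler0 subr0]. Qed.
Lemma M_scale a {m} : M m -> M (a *: m).
Proof. by move=> h; have := M_lin a h M0; rewrite addr0. Qed.
Lemma M_add {m1 m2} : M m1 -> M m2 -> M (m1 + m2).
Proof. by move=> h1 h2; have := M_lin 1 h1 h2; rewrite scale1r. Qed.

Lemma Im_mu : complex.Im mu != 0.
Proof.
move: Hmu; case: mu => a b /=; apply: contra => /eqP ->.
by rewrite oppr0.
Qed.

Lemma bound {u v} : S u v -> complex.Im mu ^+ 2 * nn u <= nn (v - mu *: u).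
Proof.
move=> h.
have hr : ip v u = (re v u)%:C.
  apply: real_conj; rewrite -ipC; exact: esym (S_sym h h).
have h1 : re v (mu *: u) = complex.Re mu * re v u.
  rewrite /re ipZr hr ReMC; congr (_ * _); by case: mu.
have h2 := nn_ge0 (v - (complex.Re mu)%:C *: u).
rewrite nnB nnZr reZr in h2.
rewrite nnB nnZ KcE h1.
lra.
Qed.
Lemma S_closedop (u v : nat -> V) x y : (forall n, S (u n) (v n)) ->
  converges ip u x -> converges ip v y -> S x y.
Proof. by case: HS => _ H _; apply: H. Qed.

Hypothesis Hcomp : forall u : nat -> V, cauchy ip u -> exists l, converges ip u l.

Lemma proj_thm w : (forall n, Ndef ip mu S n -> ip w n = 0) -> M w.
Proof.
move=> Hw.
pose E := fun r : R => exists m, M m /\ r = nn (w - m).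
have hE : has_inf E.
  split; first by exists (nn (w - 0)), 0; split => //; exact: M0.
  by exists 0 => r [m [_ ->]]; exact: nn_ge0.
pose d := inf E.
have dlow : forall m, M m -> d <= nn (w - m).
  by move=> m Mm; apply: ge_inf; [exact: hE.2 | exists m].
have d0 : 0 <= d.
  by apply: lb_le_inf; [exact: hE.1 | move=> r [m [_ ->]]; exact: nn_ge0].
have Hseq : forall n : nat, exists p : V * V,
    S p.1 p.2 /\ nn (w - (p.2 - mu *: p.1)) < d + n.+1%:R^-1.
  move=> n.
  have np : 0 < n.+1%:R^-1 :> R by rewrite invr_gt0 ltr0Sn.
  have [e [m [[x [y [Sxy em]]] ee]] he] := inf_adherent np hE.
  by exists (x, y); split => //=; rewrite -em -ee.
pose p := fun n => proj1_sig (cid (Hseq n)).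
have Hp : forall n, S (p n).1 (p n).2 /\ nn (w - ((p n).2 - mu *: (p n).1)) < d + n.+1%:R^-1.
  by move=> n; exact: (proj2_sig (cid (Hseq n))).
pose u := fun n => (p n).1.
pose v := fun n => (p n).2.
pose m := fun n => v n - mu *: u n.
have Suv : forall n, S (u n) (v n) by move=> n; exact: (Hp n).1.
have Mm : forall n, M (m n) by move=> n; exists (u n), (v n).
have hm : forall n, nn (w - m n) < d + n.+1%:R^-1 by move=> n; exact: (Hp n).2.
have par : forall n k, nn (m n - m k) <= 2 * n.+1%:R^-1 + 2 * k.+1%:R^-1.
  move=> n k; rewrite (para2 w).
  have h : d <= nn (w - (2^-1)%:C *: (m n + m k)).
    by apply: dlow; apply: M_scale; exact: M_add.
  apply: le_trans (_ : _ <= 2 * nn (w - m n) + 2 * nn (w - m k) - 4 * d) _.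
    by rewrite lerD2l lerN2 ler_pM2l.
  have := hm n; have := hm k.
  set a := nn (w - m n); set b := nn (w - m k).
  set i1 := n.+1%:R^-1; set i2 := k.+1%:R^-1; lra.
have cm : cauchy ip m.
  move=> e e0.
  have e4 : 0 < e ^+ 2 / 4 by rewrite divr_gt0 // exprn_gt0.
  have [N HN] := archi _ e4.
  exists N => n k hn hk; rewrite hnorm_lt //.
  apply: le_lt_trans (par n k) _.
  have := HN n hn; have := HN k hk.
  set i1 := n.+1%:R^-1; set i2 := k.+1%:R^-1; set E2 := e ^+ 2; lra.
have [m0 cm0] := Hcomp _ cm.
have b0 : 0 < complex.Im mu ^+ 2.
  by rewrite lt_def sqr_ge0 sqrf_eq0 Im_mu.
have cu : cauchy ip u.
  move=> e e0.
  have eb : 0 < e * `|complex.Im mu| by rewrite mulr_gt0 // normr_gt0 Im_mu.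
  have [N HN] := cm _ eb.
  exists N => n k hn hk; have := HN n k hn hk.
  rewrite !hnorm_lt // exprMn real_normK ?num_real // => h.
  have hb := bound (S_sub (Suv n) (Suv k)).
  have eq : v n - v k - mu *: (u n - u k) = m n - m k.
    by rewrite /m scalerBr sub4.
  rewrite eq in hb.
  have : complex.Im mu ^+ 2 * nn (u n - u k) < complex.Im mu ^+ 2 * e ^+ 2.
    apply: le_lt_trans hb _; by rewrite mulrC.
  by rewrite ltr_pM2l.
have [u0 cu0] := Hcomp _ cu.
have cv : converges ip v (mu *: u0 + m0).
  apply: conv_ext (conv_lin mu _ _ _ _ cu0 cm0) => n.
  by rewrite /m addrC subrK.
have Su0 : S u0 (mu *: u0 + m0) := S_closedop _ _ _ _ Suv cu0 cv.
have Mm0 : M m0 by exists u0, (mu *: u0 + m0); split => //; rewrite (addrC (mu *: u0)) addrK.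
have hle : nn (w - m0) <= d.
  rewrite -(sqr_sqrtr (nn_ge0 (w - m0))) -(sqr_sqrtr d0).
  rewrite lerXn2r ?nnegrE ?sqrtr_ge0 //.
  apply/ler_addgt0Pr => e e0.
  have e2 : 0 < e / 2 by rewrite divr_gt0.
  have [N1 H1] := cm0 _ e2.
  have e4 : 0 < (e / 2) ^+ 2 by rewrite exprn_gt0.
  have [N2 H2] := archi _ e4.
  pose n := maxn N1 N2.
  have h1 := H1 n (leq_maxl _ _); rewrite hnorm_lt // in h1.
  have h2 := H2 n (leq_maxr _ _).
  have t1 := tri (w - m n) (m n - m0).
  rewrite addrA subrK in t1.
  have t2 : Num.sqrt (nn (m n - m0)) <= e / 2.
    by rewrite -(sqrt_sqr_ge0 _ (ltW e2)) ler_sqrt ?sqr_ge0 // ltW.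
  have t3 : Num.sqrt (nn (w - m n)) <= Num.sqrt d + e / 2.
    apply: le_trans (_ : Num.sqrt (d + n.+1%:R^-1) <= _).
      by rewrite ler_sqrt ?addr_ge0 ?invr_ge0 // ltW.
    have np : 0 <= n.+1%:R^-1 :> R by rewrite invr_ge0 ler0n.
    apply: le_trans (sqrtD_le _ _ d0 np) _.
    rewrite lerD2l -(sqrt_sqr_ge0 _ (ltW e2)) ler_sqrt ?sqr_ge0 // ltW //.
  lra.
have orthm : forall mm, M mm -> ip (w - m0) mm = 0.
  have reL : forall mm, M mm -> re (w - m0) mm = 0.
    move=> mm Mmm; set r := re (w - m0) mm; set K := nn mm + 1.
    have K0 : 0 < K by rewrite /K; have := nn_ge0 mm; lra.
    have := dlow _ (M_add Mm0 (M_scale (r / K)%:C Mmm)).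
    rewrite opprD addrA nnB nnZr reZr -/r => h.
    have h3 : 0 <= (r / K) ^+ 2 * nn mm - 2 * (r / K * r) by lra.
    have h4 : 0 <= r ^+ 2 * (nn mm - 2 * K).
      have := mulr_ge0 (ltW (exprn_gt0 2 K0)) h3.
      suff -> : K ^+ 2 * ((r / K) ^+ 2 * nn mm - 2 * (r / K * r)) = r ^+ 2 * (nn mm - 2 * K) by [].
      by field; rewrite gt_eqF.
    apply: sqr_le0; have := nn_ge0 mm; rewrite /K in h4; nra.
  move=> mm Mmm; apply: ip_eq0; first exact: reL.
  have := reL _ (M_scale (- 'i) Mmm); rewrite /re ipZr.
  by have -> : conjc (- 'i) = 'i :> R[i] by rewrite /= opprK oppr0.
have Nx : Ndef ip mu S (w - m0) by move=> mm Mmm; exact: orthm.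
have h1 := Hw _ Nx.
have h2 : ip m0 (w - m0) = 0 by rewrite ipC orthm // conjc0.
have : nn (w - m0) = 0 by rewrite /nn ipBl h1 h2 subrr.
by move/nn_eq0/eqP; rewrite subr_eq0 => /eqP ->.
Qed.
End Proj.
Lemma hclosure_sub (D : V -> Prop) x : D x -> hclosure ip D x.
Proof.
move=> Dx e e0; exists x; split => //; rewrite hnorm_lt // subrr nn0 exprn_gt0 //.
Qed.

Lemma subsub (g a b : V) : (g - b) - (g - a) = a - b.
Proof. by rewrite sub4 subrr sub0r opprB. Qed.

Section FwdBwd.
Variable S : V -> V -> Prop.
Variable l : R[i].
Hypothesis HS : closed_symmetric ip S.
Hypothesis Hl : conjc l != l.

Lemma lcl0 : l - conjc l != 0.
Proof. by rewrite subr_eq0 eq_sym. Qed.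

Lemma fwd psi phi h k : Ndef ip l S psi -> Ndef ip (conjc l) S phi ->
  S h k -> h = psi - phi -> forbidden ip l S psi phi.
Proof.
move=> Npsi Nphi Shk eh.
set a := (l - conjc l)^-1.
have ha : a * (l - conjc l) = 1 by rewrite mulVf // lcl0.
exists (psi + a *: (k - l *: h)); split; last split.
- move=> x Hx; apply: (orth_closure (dom S)) Hx => u [y Suy].
  have e1 : ip psi y = conjc l * ip psi u.
    have := Npsi (y - l *: u) (ex_intro _ u (ex_intro _ y (conj Suy erefl))).
    by rewrite ipBr ipZr => /eqP; rewrite subr_eq0 => /eqP.
  have e2 : ip phi y = l * ip phi u.
    have := Nphi (y - conjc l *: u) (ex_intro _ u (ex_intro _ y (conj Suy erefl))).
    by rewrite ipBr ipZr conjcK => /eqP; rewrite subr_eq0 => /eqP.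
  have e3 : ip k u = ip h y by rewrite (S_sym _ HS Shk Suy).
  rewrite ipDl ipZl ipBl ipZl e3 eh !ipBl e1 e2.
  rewrite /a; field; exact: lcl0.
- split => // n Nn.
  have -> : psi + a *: (k - l *: h) - psi = a *: (k - l *: h) by rewrite addrC addKr.
  rewrite ipZl ipC (Nn (k - l *: h)) ?conjc0 ?mulr0 //.
  by exists h, k.
- split; first exact: Nphi.
  move=> n Nn.
  have -> : psi + a *: (k - l *: h) - phi = a *: (k - conjc l *: h).
    rewrite addrAC -eh.
    rewrite -{1}(scale1r h) -ha -scalerA scalerBl -scalerDr.
    by rewrite addrC addrA subrK.
  rewrite ipZl ipC (Nn (k - conjc l *: h)) ?conjc0 ?mulr0 //.
  by exists h, k.
Qed.
Hypothesis Hcomp : forall u : nat -> V, cauchy ip u -> exists l, converges ip u l.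

Lemma bwd psi phi : forbidden ip l S psi phi -> exists k', S (psi - phi) k'.
Proof.
move=> [g [Hg [[Npsi Og1] [Nphi Og2]]]].
have Hl' : conjc (conjc l) != conjc l by rewrite conjcK eq_sym.
have [k1 [y1 [S1 E1]]] := proj_thm S l HS Hl Hcomp _ Og1.
have [k2 [y2 [S2 E2]]] := proj_thm S (conjc l) HS Hl' Hcomp _ Og2.
have Hgv : forall v y, S v y -> ip g v = 0.
  by move=> v y Svy; apply: Hg; apply: hclosure_sub; exists y.
have SD := S_sub _ HS S2 S1.
have key : forall v y, S v y ->
    ip ((y2 - y1) - conjc l *: (k2 - k1)) (y - conjc l *: v) = 0.
  move=> v y Svy.
  have ey1 : y1 = g - psi + l *: k1 by rewrite E1 subrK.
  have ey2 : y2 = g - phi + conjc l *: k2 by rewrite E2 subrK.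
  have e1 : ip psi y = conjc l * ip psi v.
    have := Npsi (y - l *: v) (ex_intro _ v (ex_intro _ y (conj Svy erefl))).
    by rewrite ipBr ipZr => /eqP; rewrite subr_eq0 => /eqP.
  have e2 : ip phi y = l * ip phi v.
    have := Nphi (y - conjc l *: v) (ex_intro _ v (ex_intro _ y (conj Svy erefl))).
    by rewrite ipBr ipZr conjcK => /eqP; rewrite subr_eq0 => /eqP.
  have e3 : ip psi v = l * ip k1 v - ip k1 y.
    have := Hgv v y Svy; rewrite {1}(_ : g = psi + (y1 - l *: k1)); last first.
      by rewrite -E1 addrC subrK.
    rewrite ipDl ipBl ipZl (S_sym _ HS S1 Svy) => /eqP.
    by rewrite addr_eq0 => /eqP ->; rewrite opprB.
  rewrite ey1 ey2 !ipBl !ipDl !ipZl !ipBl !ipBr !ipZr !conjcK !ipNl e1 e2 e3.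
  set G := ip g (y - conjc l *: v).
  set K2 := ip k2 (y - conjc l *: v).
  ring.
have h0 := key _ _ SD.
have hz : y2 - y1 = conjc l *: (k2 - k1).
  apply/eqP; rewrite -subr_eq0; apply/eqP; apply: nn_eq0.
  by move: h0; rewrite ipxx => /(congr1 (@complex.Re _)).
have hD : k2 - k1 = 0.
  have sy := S_sym _ HS SD SD.
  rewrite hz ipZl ipZr conjcK ipxx in sy.
  apply: nn_eq0; apply/eqP.
  have : (conjc l - l) * (nn (k2 - k1))%:C == 0 by rewrite mulrBl sy subrr.
  rewrite mulf_eq0 subr_eq0 (negbTE Hl) /= => /eqP /(congr1 (@complex.Re _)) /= ->.
  by [].
have ek : k2 = k1 by apply/eqP; rewrite -subr_eq0 hD.
have ey : y2 = y1 by apply/eqP; rewrite -subr_eq0 hz hD scaler0.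
exists ((l - conjc l) *: y1).
have -> : psi - phi = (l - conjc l) *: k1.
  by rewrite -(subsub g psi phi) E1 E2 ek ey subsub scalerBl.
exact: (S_scale S HS (l - conjc l) S1).
Qed.
End FwdBwd.
Section Ops.
Variable T : V -> V -> Prop.
Hypothesis HT : linop T.
Lemma L_lin a {x1 y1 x2 y2} : T x1 y1 -> T x2 y2 -> T (a *: x1 + x2) (a *: y1 + y2).
Proof. by case: HT => [_ [_ H]] h1 h2; exact: (H a _ _ _ _ h1 h2). Qed.
Lemma L00 : T 0 0.
Proof. by case: HT => [_ [H _]]. Qed.
Lemma L_fun {x y1 y2} : T x y1 -> T x y2 -> y1 = y2.
Proof. by case: HT => [H [_ _]] h1 h2; exact: (H _ _ _ h1 h2). Qed.
Lemma L_sub {x1 y1 x2 y2} : T x1 y1 -> T x2 y2 -> T (x1 - x2) (y1 - y2).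
Proof.
move=> h1 h2; have := L_lin (-1) h2 h1.
by rewrite !scaleN1r (addrC (- x2)) (addrC (- y2)).
Qed.
Lemma L_scale a {x y} : T x y -> T (a *: x) (a *: y).
Proof. by move=> h; have := L_lin a h L00; rewrite !addr0. Qed.
End Ops.

Lemma inv_cs A : closed_symmetric ip A -> injective_op A -> closed_symmetric ip (inv_op A).
Proof.
move=> [[Af [A00 Al]] Ac As] Ai; split.
- split; first by move=> x y1 y2 h1 h2; exact: (Ai _ _ _ h1 h2).
  split; first exact: A00.
  by move=> a x1 y1 x2 y2 h1 h2; exact: Al.
- by move=> u v x y h cu cv; exact: (Ac v u y x h cv cu).
- by move=> x1 y1 x2 y2 h1 h2; rewrite (As _ _ _ _ h1 h2).
Qed.

Lemma Ndef_inv (A : V -> V -> Prop) (l : R[i]) n : l != 0 ->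
  Ndef ip l A n <-> Ndef ip l^-1 (inv_op A) n.
Proof.
move=> l0; split.
- move=> H w [x [y [Ayx ->]]].
  have -> : y - l^-1 *: x = (- l^-1) *: (x - l *: y).
    by rewrite scalerBr scalerA mulNr mulVf // scaleN1r opprK scaleNr addrC.
  by rewrite ipZr (H (x - l *: y)) ?mulr0 //; exists y, x.
- move=> H m [x [y [Axy ->]]].
  have -> : y - l *: x = (- l) *: (x - l^-1 *: y).
    by rewrite scalerBr scalerA mulNr mulfV // scaleN1r opprK scaleNr addrC.
  by rewrite ipZr (H (x - l^-1 *: y)) ?mulr0 //; exists y, x.
Qed.

Lemma Ndef_scale (S : V -> V -> Prop) l c n : Ndef ip l S n -> Ndef ip l S (c *: n).
Proof. by move=> H m Mm; rewrite ipZl H // mulr0. Qed.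

Lemma lin3 (a b d a' b' d' : V) (s t : R[i]) :
  (a + s *: b - t *: d) - (a' + s *: b' - t *: d') = (a - a') + s *: (b - b') - t *: (d - d').
Proof. by rewrite sub4 !scalerBr opprD addrACA. Qed.
Lemma main_lemma (Hcomp : forall u : nat -> V, cauchy ip u -> exists l, converges ip u l)
  (A T : V -> V -> Prop) (z : R[i]) :
  closed_symmetric ip A ->
  injective_op A ->
  'Im z != 0 ->
  admissible ip z A T ->
  (injective_op (Bop z A T) <->
   admissible ip z^-1 (inv_op A) (scale_op (z / conjc z) T)).
Proof.
move=> HA Ainj HIm [HTl HTd HTr HTf].
have zcz : conjc z != z.
  have gen : forall c : R[i], 'Im c != 0 -> conjc c != c.
    move=> c; rewrite -complexIm; case: c => a b /=.
    by apply: contra => /eqP [h]; apply/eqP; congr (_%:C); lra.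
  exact: gen.
have z0 : z != 0 by apply: contraNneq zcz => ->; rewrite conjc0.
have cz0 : conjc z != 0 by rewrite conjc_eq0.
have HAl : linop A by case: HA.
set S := inv_op A.
have HS : closed_symmetric ip S by exact: inv_cs.
set lam := z^-1.
have clam : conjc lam = (conjc z)^-1 by rewrite /lam conjc_inv.
have Hlam : conjc lam != lam.
  by rewrite clam /lam; apply: contra zcz => /eqP /invr_inj ->.
have NeqA : forall n, Ndef ip z A n <-> Ndef ip lam S n.
  by move=> n; exact: Ndef_inv.
have NeqA' : forall n, Ndef ip (conjc z) A n <-> Ndef ip (conjc lam) S n.
  by move=> n; rewrite clam; exact: Ndef_inv.
split.
-
  move=> HB; split.
  + split; [|split].
    * move=> x y1 y2 [a1 [Ta1 ->]] [a2 [Ta2 ->]]; by rewrite (L_fun _ HTl Ta1 Ta2).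
    * by exists 0; split; [exact: (L00 _ HTl) | rewrite scaler0].
    * move=> a x1 y1 x2 y2 [b1 [Tb1 ->]] [b2 [Tb2 ->]].
      exists (a *: b1 + b2); split; first exact: (L_lin _ HTl a Tb1 Tb2).
      by rewrite scalerDr !scalerA mulrC.
  + move=> x [y [y' [Ty' _]]]; apply/NeqA; apply: HTd; by exists y'.
  + move=> y [x [y' [Ty' ->]]]; apply/NeqA'; apply: Ndef_scale; apply: HTr; by exists x.
  + move=> [psi [phi [[y' [Ty' ephi]] [psi0 Hf]]]].
    have [k' Sk'] := bwd S lam HS Hlam Hcomp _ _ Hf.
    set c := (conjc z)^-1.
    have HBx : Bop z A T (k' + c *: y' - c *: psi) 0.
      exists k', (psi - phi), (c *: psi), (c *: y'); split; first exact: Sk'.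
      split; first exact: (L_scale _ HTl c Ty').
      split => //.
      rewrite ephi !scalerA ncj /c mulfV // scale1r.
      by rewrite subrK subrr.
    have HB0 : Bop z A T 0 0.
      exists 0, 0, 0, 0; split; first exact: (L00 _ HAl).
      split; first exact: (L00 _ HTl).
      by split; [rewrite !addr0 subr0 | rewrite !scaler0 !addr0 subr0].
    have hx := HB _ _ _ HBx HB0.
    have Npsi : Ndef ip lam S psi by apply/NeqA; apply: HTd; exists y'.
    have hw := Npsi (k' - lam *: (psi - phi))
      (ex_intro _ (psi - phi) (ex_intro _ k' (conj Sk' erefl))).
    have ek : k' = c *: psi - c *: y'.
      apply/eqP; rewrite -subr_eq0 opprB addrA; exact/eqP.
    rewrite ek ephi ?ncj in hw; rewrite !(ipBr, ipZr) in hw.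
    have e1 : conjc c = z^-1 by rewrite /c conjc_inv conjcK.
    have e2 : conjc (z / conjc z) = conjc z / z by rewrite cjM conjc_inv conjcK.
    rewrite e1 clam e2 -/c in hw.
    have : (z^-1 - c) * ip psi psi = 0.
      rewrite -hw /c; field; by rewrite z0 cz0.
    move/eqP; rewrite mulf_eq0 => /orP [].
      rewrite subr_eq0 /c => /eqP /invr_inj /eqP; by rewrite eq_sym (negbTE zcz).
    rewrite ipxx => /eqP /(congr1 (@complex.Re _)) /= /nn_eq0; exact: psi0.
-
  move=> [HCl HCd HCr HCf] x1 x2 y.
  move=> [f1 [Af1 [p1 [Tp1 [hA1 [hT1 [ex1 ey1]]]]]]].
  move=> [f2 [Af2 [p2 [Tp2 [hA2 [hT2 [ex2 ey2]]]]]]].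
  have hA := L_sub _ HAl hA1 hA2.
  have hT := L_sub _ HTl hT1 hT2.
  have Hy : (Af1 - Af2) + z *: (Tp1 - Tp2) - conjc z *: (p1 - p2) = 0.
    by rewrite -lin3 -ey1 -ey2 subrr.
  have Hx : x1 - x2 = (f1 - f2) + (Tp1 - Tp2) - (p1 - p2).
    by rewrite ex1 ex2 -[Tp1]scale1r -[p1]scale1r -[Tp2]scale1r -[p2]scale1r lin3 !scale1r.
  apply/eqP; rewrite -subr_eq0 Hx; apply/eqP.
  move: hA hT Hy; set f := f1 - f2; set Af := Af1 - Af2; set p := p1 - p2; set Tp := Tp1 - Tp2.
  move=> hA hT Hy.
  have [p0|pn0] := eqVneq p 0.
    rewrite p0 in hT Hy *.
    have Tp0 : Tp = 0 := L_fun _ HTl hT (L00 _ HTl).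
    rewrite Tp0 !scaler0 subr0 addr0 in Hy.
    rewrite Hy in hA.
    have f0 : f = 0 := Ainj _ _ _ hA (L00 _ HAl).
    by rewrite f0 Tp0 !addr0 subr0.
  exfalso; apply: HCf.
  exists (conjc z *: p), (z *: Tp); split; last split.
  - exists (conjc z *: Tp); split; first exact: (L_scale T HTl (conjc z) hT).
    by rewrite scalerA mulfVK.
  - by apply/eqP; rewrite scaler_eq0 negb_or cz0.
  - apply: (fwd S lam HS Hlam _ _ Af f).
    + apply/NeqA; apply: Ndef_scale; apply: HTd; by exists Tp.
    + apply/NeqA'; apply: Ndef_scale; apply: HTr; by exists p.
    + exact: hA.
    + by apply/eqP; rewrite -subr_eq0 opprB addrA Hy.
Qed.
End Basics.

Theorem theorem1 (R : realType) (V : lmodType R[i]) (inner : V -> V -> R[i])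
  (A T : V -> V -> Prop) (z : R[i]) :
  is_hilbert inner ->
  closed_symmetric inner A ->
  injective_op A ->
  'Im z != 0 ->
  (forall psi Tpsi, T psi Tpsi -> hnorm inner Tpsi <= hnorm inner psi) ->
  admissible inner z A T ->
  (injective_op (Bop z A T) <->
   admissible inner z^-1 (inv_op A) (scale_op (z / z^*) T)).
Proof.
move=> [Hip Hcomp] HA Ainj HIm _ HT.
exact: (@main_lemma R V inner Hip Hcomp A T z HA Ainj HIm HT).
Qed.
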